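(* Consider a wave sequence $U_L\xrightarrow{C}U_M\xrightarrow{S}U_R$ with $U_L\neq U_R$, consisting of an admissible $C$-wave from $U_L$ to $U_M$ followed by an admissible $S$-wave from $U_M$ to $U_R$. This wave sequence is compatible if and only if $U_M\in\mathcal{L}\cup\mathcal{T}$ and $0\le S_R\le S^k(U_M)$.
   Context: System: $\partial_t S+\partial_x f(S,C)=0$, $\partial_t[(S+\mathcal{A})C]+\partial_x[f(S,C)C]=0$, with $\mathcal{A}>0$ constant and states $U=(S,C)\in[0,1]^2$. The flux $f$ satisfies: (a) $f\in\mathscr{C}^2$, $f(0,C)=0$, $f(1,C)=1$, $\partial_Sf(0,C)=\partial_Sf(1,C)=0$; (b) for each $C$, $f(\cdot,C)$ is strictly increasing and S-shaped with a single inflection point (convex then concave); (c) $\partial_Cf>0$ for $0<S<1$. Eigenvalues: $\lambda_C(S,C)=f(S,C)/(S+\mathcal{A})$, $\lambda_S(S,C)=\partial_Sf(S,C)$. Transition curve $\mathcal{T}=\{\lambda_S=\lambda_C\}$, $\mathcal{L}=\{\lambda_S>\lambda_C\}$, $\mathcal{R}=\{\lambda_S<\lambda_C\}$; for each $C$, $\mathcal{T}$ contains exactly one point $(S^*(C),C)$ with $S^*(C)\in(0,1)$. For a state $U=(S,C)$, $S^k(U)$ denotes the value $S'\in[0,1]$, $S'\ne S$, with $\lambda_C(S',C)=\lambda_C(U)$ (it lies on the opposite side of $\mathcal{T}$ from $U$); $S^k(U)=+\infty$ if no such $S'$ exists, and $S^k(U)=S^*(C)$ if $S=S^*(C)$.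 An $S$-wave from $U_1$ to $U_2$ requires $C_1=C_2=C$ and is the solution of the scalar Riemann problem $\partial_tS+\partial_xf(S,C)=0$ with left state $S_1$, right state $S_2$, built from shocks satisfying Oleinik's entropy condition and rarefactions; its initial velocity $v_i$ and final velocity $v_f$ are the smallest and largest propagation speeds in that wave fan. A $C$-wave from $U_1$ to $U_2$ is a contact discontinuity with $\lambda_C(U_1)=\lambda_C(U_2)$, travelling with speed $v_i=v_f=\lambda_C(U_1)$; it is admissible iff $U_1,U_2$ both lie in $\mathcal{L}\cup\mathcal{T}$ or both in $\mathcal{R}\cup\mathcal{T}$. A sequence $U_1\xrightarrow{a}U_2\xrightarrow{b}U_3$ is compatible iff $v_f^a\le v_i^b$ (and a longer sequence is compatible iff each consecutive pair is). *)

(* Defs.v *)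
From Stdlib Require Import Reals.
From Coquelicot Require Import Coquelicot.
Open Scope R_scope.

Definition dS (f : R -> R -> R) (s c : R) : R := Derive (fun x => f x c) s.
Definition dC (f : R -> R -> R) (s c : R) : R := Derive (fun y => f s y) c.

Definition C2 (f : R -> R -> R) : Prop :=
  forall s c : R,
    ex_derive (fun x => f x c) s /\ ex_derive (fun y => f s y) c /\
    ex_derive (fun x => dS f x c) s /\ ex_derive (fun y => dS f s y) c /\
    ex_derive (fun x => dC f x c) s /\ ex_derive (fun y => dC f s y) c /\
    continuous (fun p : R * R => f (fst p) (snd p)) (s, c) /\
    continuous (fun p : R * R => dS f (fst p) (snd p)) (s, c) /\
    continuous (fun p : R * R => dC f (fst p) (snd p)) (s, c) /\
    continuous (fun p : R * R => dS (dS f) (fst p) (snd p)) (s, c) /\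
    continuous (fun p : R * R => dC (dS f) (fst p) (snd p)) (s, c) /\
    continuous (fun p : R * R => dS (dC f) (fst p) (snd p)) (s, c) /\
    continuous (fun p : R * R => dC (dC f) (fst p) (snd p)) (s, c).

Definition strictly_convex_on (g : R -> R) (a b : R) : Prop :=
  forall x y t, a <= x -> x < y -> y <= b -> 0 < t < 1 ->
    g (t * x + (1 - t) * y) < t * g x + (1 - t) * g y.

Definition strictly_concave_on (g : R -> R) (a b : R) : Prop :=
  forall x y t, a <= x -> x < y -> y <= b -> 0 < t < 1 ->
    g (t * x + (1 - t) * y) > t * g x + (1 - t) * g y.

Definition lamC (f : R -> R -> R) (A s c : R) : R := f s c / (s + A).
Definition lamS (f : R -> R -> R) (s c : R) : R := dS f s c.

Definition flux_assumptions (f : R -> R -> R) (A : R) : Prop :=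
  0 < A /\
  C2 f /\
  (forall c, 0 <= c <= 1 ->
     f 0 c = 0 /\ f 1 c = 1 /\ dS f 0 c = 0 /\ dS f 1 c = 0) /\
  (forall c, 0 <= c <= 1 ->
     (forall x y, 0 <= x -> x < y -> y <= 1 -> f x c < f y c) /\
     (exists p, 0 < p < 1 /\
        strictly_convex_on (fun x => f x c) 0 p /\
        strictly_concave_on (fun x => f x c) p 1)) /\
  (forall s c, 0 < s < 1 -> 0 <= c <= 1 -> dC f s c > 0) /\
  (* T contains exactly one point (S*(C),C) with S*(C) in (0,1) *)
  (forall c, 0 <= c <= 1 ->
     exists! s, (0 < s < 1) /\ lamS f s c = lamC f A s c).

Definition in_LT (f : R -> R -> R) (A s c : R) : Prop := lamS f s c >= lamC f A s c.
Definition in_RT (f : R -> R -> R) (A s c : R) : Prop := lamS f s c <= lamC f A s c.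

(** "s' <= S^k(U)" for U = (s,c), with S^k(U) = +oo when no partner exists.
    If s = S*(c) (the unique point of T with 0 < s < 1), S^k(U) = s;
    otherwise S^k(U) is the (unique) S' in [0,1], S' <> s, with equal lamC. *)
Definition le_Sk (f : R -> R -> R) (A s c s' : R) : Prop :=
  ((0 < s < 1 /\ lamS f s c = lamC f A s c) -> s' <= s) /\
  (~ (0 < s < 1 /\ lamS f s c = lamC f A s c) ->
     forall S', 0 <= S' <= 1 -> S' <> s -> lamC f A S' c = lamC f A s c -> s' <= S').

Definition admissible_Cwave (f : R -> R -> R) (A s1 c1 s2 c2 : R) : Prop :=
  lamC f A s1 c1 = lamC f A s2 c2 /\
  ((in_LT f A s1 c1 /\ in_LT f A s2 c2) \/ (in_RT f A s1 c1 /\ in_RT f A s2 c2)).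

Definition shock_speed (f : R -> R -> R) (c a b : R) : R := (f b c - f a c) / (b - a).

Definition strictly_between (a s b : R) : Prop := Rmin a b < s < Rmax a b.
Definition weakly_between (a s b : R) : Prop := Rmin a b <= s <= Rmax a b.

Definition oleinik_shock (f : R -> R -> R) (c a b : R) : Prop :=
  a <> b /\
  forall s, strictly_between a s b ->
    (f s c - f a c) / (s - a) >= shock_speed f c a b /\
    shock_speed f c a b >= (f s c - f b c) / (s - b).

Definition rarefaction (f : R -> R -> R) (c a b : R) : Prop :=
  a <> b /\
  forall s t, weakly_between a s b -> weakly_between a t b ->
    (t - s) * (b - a) > 0 -> lamS f s c < lamS f t c.

Definition elem_wave (f : R -> R -> R) (c : R) (shock : bool) (a b : R) : Prop :=
  if shock then oleinik_shock f c a b else rarefaction f c a b.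
Definition elem_vi (f : R -> R -> R) (c : R) (shock : bool) (a b : R) : R :=
  if shock then shock_speed f c a b else lamS f a c.
Definition elem_vf (f : R -> R -> R) (c : R) (shock : bool) (a b : R) : R :=
  if shock then shock_speed f c a b else lamS f b c.

Inductive sfan (f : R -> R -> R) (c : R) : R -> R -> R -> R -> Prop :=
  | sfan_one : forall k a b,
      elem_wave f c k a b ->
      sfan f c a b (elem_vi f c k a b) (elem_vf f c k a b)
  | sfan_cons : forall k a m b vi' vf,
      elem_wave f c k a m -> strictly_between a m b ->
      sfan f c m b vi' vf -> elem_vf f c k a m <= vi' ->
      sfan f c a b (elem_vi f c k a m) vf.

(** S-wave from (a,c) to (b,c): the entropy solution of the scalar Riemann
    problem with left state a and right state b, with its initial (smallest)
    speed vi and final (largest) speed vf.  The trivial wave (a = b) is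
    assigned the characteristic speed lamS(a,c). *)
Inductive swave (f : R -> R -> R) (c : R) : R -> R -> R -> R -> Prop :=
  | swave_trivial : forall a, swave f c a a (lamS f a c) (lamS f a c)
  | swave_fan : forall a b vi vf, a <> b -> sfan f c a b vi vf -> swave f c a b vi vf.

(* Main.v *)
Require Import Defs.
From Stdlib Require Import Reals.
From Coquelicot Require Import Coquelicot.
Open Scope R_scope.
From Stdlib Require Import Lra Psatz.
Lemma lin_der (A s : R) : is_derive (fun x => x + A) s 1.
Proof. auto_derive; [trivial | ring]. Qed.

Lemma cont_of_der (F F' : R -> R) (HD : forall s, is_derive F s (F' s)) : continuity F.
Proof.
  intro s. apply continuity_pt_filterlim. apply (@ex_derive_continuous R_AbsRing R_NormedModule).
  exists (F' s). apply HD.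
Qed.

Section Key.
Variables (F F' : R -> R) (A : R).
Hypothesis HA : 0 < A.
Hypothesis HD : forall s, is_derive F s (F' s).
Hypothesis HC : forall s, continuity_pt F' s.
Hypothesis F0 : F 0 = 0.
Hypothesis F1 : F 1 = 1.
Hypothesis F'1 : F' 1 = 0.
Hypothesis Hinc : forall x y, 0 <= x -> x < y -> y <= 1 -> F x < F y.
Variable Ss : R.
Hypothesis HSs : 0 < Ss < 1.
Hypothesis HSsE : F' Ss = F Ss / (Ss + A).
Hypothesis Huniq : forall s, 0 < s < 1 -> F' s = F s / (s + A) -> s = Ss.

Let E s := F' s * (s + A) - F s.
Let h s := F s / (s + A).

Lemma E_cont : continuity E.
Proof.
  intro s. unfold E. apply continuity_pt_minus.
  - apply continuity_pt_mult. apply HC. apply continuity_pt_plus.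
    apply derivable_continuous_pt, derivable_pt_id. apply continuity_pt_const. intros x y; reflexivity.
  - apply (cont_of_der F F' HD).
Qed.

Lemma E_zero s : 0 < s < 1 -> E s = 0 -> s = Ss.
Proof.
  intros Hs HE. apply Huniq; auto. unfold E in HE.
  field_simplify_eq; [lra | lra].
Qed.

Lemma h_der s : 0 <= s -> derivable_pt_lim h s (E s / (s + A) ^ 2).
Proof.
  intro Hs. apply is_derive_Reals.
  assert (H := is_derive_div F (fun x => x + A) s (F' s) 1 (HD s) (lin_der A s)).
  replace (E s / (s + A) ^ 2) with ((F' s * (s + A) - F s * 1) / (s + A) ^ 2).
  apply H; lra. unfold E. f_equal. ring.
Qed.

Lemma h_mvt x y : 0 <= x -> x < y -> exists c, h y - h x = E c / (c + A) ^ 2 * (y - x) /\ x < c < y.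
Proof.
  intros Hx Hxy. apply (MVT_cor2 h (fun s => E s / (s + A) ^ 2)); auto.
  intros c Hc. apply h_der. lra.
Qed.

Lemma E1 : E 1 < 0.
Proof. unfold E. rewrite F1, F'1. lra. Qed.

Lemma K2 s : Ss < s <= 1 -> E s < 0.
Proof.
  intros Hs. destruct (Req_dec s 1) as [->|Hs1]. apply E1.
  destruct (Rlt_le_dec (E s) 0) as [|Hge]; auto.
  destruct (Req_dec (E s) 0) as [H0|Hn].
  - apply E_zero in H0; lra.
  - exfalso. destruct (IVT (fun x => - E x) s 1) as [z [Hz1 Hz2]].
    + intro x. apply continuity_pt_opp, E_cont.
    + lra.
    + lra.
    + generalize E1; lra.
    + assert (z <> 1) by (intro; subst; generalize E1; lra).
      assert (E z = 0) by lra. apply E_zero in H0; lra.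
Qed.

Lemma K1 s : 0 < s < Ss -> E s > 0.
Proof.
  intros Hs.
  destruct (Rlt_le_dec 0 (E s)) as [|Hle]; auto. exfalso.
  destruct (Req_dec (E s) 0) as [H0|Hn].
  - apply E_zero in H0; lra.
  - assert (Hneg : forall t, 0 < t <= s -> E t < 0).
    { intros t Ht. destruct (Req_dec t s) as [->|Hts]; [lra|].
      destruct (Rlt_le_dec (E t) 0) as [|Hge]; auto.
      destruct (Req_dec (E t) 0) as [H0|Hn'].
      - apply E_zero in H0; lra.
      - exfalso. destruct (IVT (fun x => - E x) t s) as [z [Hz1 Hz2]].
        + intro x. apply continuity_pt_opp, E_cont.
        + lra.
        + lra.
        + lra.
        + assert (z <> s) by (intro; subst; lra).
          assert (z <> t) by (intro; subst; lra).
          assert (Ez : E z = 0) by lra. apply E_zero in Ez; lra. }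
    destruct (h_mvt 0 s) as [c [Hc1 Hc2]]; try lra.
    assert (Ec := Hneg c ltac:(lra)).
    assert (Fs : F s > 0) by (rewrite <- F0; apply Hinc; lra).
    unfold h in Hc1. rewrite F0 in Hc1.
    assert (Hq : 0 < (c + A) ^ 2) by (apply pow_lt; lra).
    set (q := E c / (c + A) ^ 2) in *.
    assert (q * (c + A) ^ 2 = E c) by (unfold q; field; lra).
    set (r := F s / (s + A)) in *.
    assert (r * (s + A) = F s) by (unfold r; field; lra).
    assert (0 / (0 + A) = 0) by (field; lra). rewrite H1 in Hc1.
    assert (q < 0) by nra. assert (r > 0) by nra. nra.
Qed.

Lemma M1 x y : 0 <= x -> x < y -> y <= Ss -> h x < h y.
Proof.
  intros. destruct (h_mvt x y) as [c [Hc1 Hc2]]; try lra.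
  assert (Ec := K1 c ltac:(lra)).
  assert (Hq : 0 < (c + A) ^ 2) by (apply pow_lt; lra).
  set (q := E c / (c + A) ^ 2) in *.
  assert (q * (c + A) ^ 2 = E c) by (unfold q; field; lra).
  nra.
Qed.

Lemma M2 x y : Ss <= x -> x < y -> y <= 1 -> h y < h x.
Proof.
  intros. destruct (h_mvt x y) as [c [Hc1 Hc2]]; try lra.
  assert (Ec := K2 c ltac:(lra)).
  assert (Hq : 0 < (c + A) ^ 2) by (apply pow_lt; lra).
  set (q := E c / (c + A) ^ 2) in *.
  assert (q * (c + A) ^ 2 = E c) by (unfold q; field; lra).
  nra.
Qed.

Lemma K1' s : 0 < s < Ss -> F' s > F s / (s + A).
Proof.
  intros. assert (H1 := K1 s H). unfold E in H1.
  set (r := F s / (s + A)). assert (r * (s + A) = F s) by (unfold r; field; lra). nra.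
Qed.

Lemma K2' s : Ss < s <= 1 -> F' s < F s / (s + A).
Proof.
  intros. assert (H1 := K2 s H). unfold E in H1.
  set (r := F s / (s + A)). assert (r * (s + A) = F s) by (unfold r; field; lra). nra.
Qed.

End Key.
Section Waves.
Variables (f : R -> R -> R) (c lam : R).
Hypothesis HD : forall s, is_derive (fun x => f x c) s (dS f s c).

Lemma elem_ne k a b : elem_wave f c k a b -> a <> b.
Proof. destruct k; simpl; intros [H _]; exact H. Qed.

Lemma elem_vi_vf k a b : elem_wave f c k a b -> elem_vi f c k a b <= elem_vf f c k a b.
Proof.
  destruct k; simpl; intros H. lra.
  destruct H as [Hne H]. apply Rlt_le. apply H.
  - unfold weakly_between, Rmin, Rmax; destruct (Rle_dec a b); lra.
  - unfold weakly_between, Rmin, Rmax; destruct (Rle_dec a b); lra.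
  - assert (0 < (b - a) * (b - a)). { apply Rsqr_pos_lt. lra. } exact H0.
Qed.

Lemma elem_gain k a b : elem_wave f c k a b -> a < b -> lam <= elem_vi f c k a b ->
  f b c - f a c >= lam * (b - a).
Proof.
  intros Hw Hab Hl. destruct k; simpl in *.
  - unfold shock_speed in Hl.
    set (q := (f b c - f a c) / (b - a)) in *.
    assert (q * (b - a) = f b c - f a c) by (unfold q; field; lra). nra.
  - destruct Hw as [Hne Hw].
    destruct (MVT_cor2 (fun x => f x c) (fun x => dS f x c) a b Hab) as [xi [Hxi1 Hxi2]].
    { intros t Ht. apply is_derive_Reals. apply HD. }
    assert (lamS f a c < lamS f xi c).
    { apply Hw.
      - unfold weakly_between, Rmin, Rmax; destruct (Rle_dec a b); lra.
      - unfold weakly_between, Rmin, Rmax; destruct (Rle_dec a b); lra.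
      - nra. }
    unfold lamS in *. rewrite Hxi1. nra.
Qed.

Lemma fan_gain a b vi vf : sfan f c a b vi vf -> a < b -> lam <= vi ->
  f b c - f a c >= lam * (b - a).
Proof.
  induction 1 as [k a b Hw | k a m b vi' vf Hw Hbt Hfan IH Hle]; intros Hab Hl.
  - eapply elem_gain; eauto.
  - unfold strictly_between, Rmin, Rmax in Hbt. destruct (Rle_dec a b); [|lra].
    assert (H1 := elem_gain k a m Hw ltac:(lra) Hl).
    assert (H2 := elem_vi_vf k a m Hw).
    assert (H3 := IH ltac:(lra) ltac:(lra)). lra.
Qed.

End Waves.

Lemma fan_first f c a b vi vf : sfan f c a b vi vf ->
  exists k m, elem_wave f c k a m /\ vi = elem_vi f c k a m /\
    (m = b \/ strictly_between a m b).
Proof.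
  destruct 1 as [k a b Hw | k a m b vi' vf Hw Hbt Hfan Hle].
  - exists k, b. auto.
  - exists k, m. auto.
Qed.

Lemma shock_rel (f : R -> R -> R) (A c a m : R) : 0 < A -> 0 <= a -> 0 <= m -> m <> a ->
  shock_speed f c a m - lamC f A a c = (lamC f A m c - lamC f A a c) * (m + A) / (m - a).
Proof. intros. unfold shock_speed, lamC. field. repeat split; lra. Qed.

Theorem lemma3p1 (f : R -> R -> R) (A : R) (Hf : flux_assumptions f A)
  (SL CL SM CM SR CR vi vf : R)
  (HL : 0 <= SL <= 1 /\ 0 <= CL <= 1)
  (HM : 0 <= SM <= 1 /\ 0 <= CM <= 1)
  (HR : 0 <= SR <= 1 /\ 0 <= CR <= 1)
  (Hneq : (SL, CL) <> (SR, CR))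
  (HCw : admissible_Cwave f A SL CL SM CM)
  (HCR : CR = CM)
  (HSw : swave f CM SM SR vi vf) :
  (* compatibility: final speed of the C-wave <= initial speed of the S-wave *)
  lamC f A SL CL <= vi <->
  (in_LT f A SM CM /\ 0 <= SR /\ le_Sk f A SM CM SR).
Proof.
  destruct Hf as (HA & HC2 & Ha & Hb & Hc & HT).
  destruct (Ha CM (proj2 HM)) as (F0 & F1 & F'0 & F'1).
  destruct (Hb CM (proj2 HM)) as (Hinc & _).
  assert (HD : forall s, is_derive (fun x => f x CM) s (dS f s CM)).
  { intro s. unfold dS. apply Derive_correct. destruct (HC2 s CM) as (H1 & _). exact H1. }
  assert (HCt : forall s, continuity_pt (fun x => dS f x CM) s).
  { intro s. apply continuity_pt_filterlim.
    apply (@ex_derive_continuous R_AbsRing R_NormedModule (fun x => dS f x CM) s).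
    destruct (HC2 s CM) as (_ & _ & H3 & _). exact H3. }
  destruct (HT CM (proj2 HM)) as [Ss [[HSs HSsE] HU]].
  assert (Huniq : forall s, 0 < s < 1 -> dS f s CM = f s CM / (s + A) -> s = Ss).
  { intros s Hs He. symmetry. apply HU. split; auto. }
  assert (hM1 : forall x y, 0 <= x -> x < y -> y <= Ss -> lamC f A x CM < lamC f A y CM).
  { intros. eapply (M1 (fun x => f x CM) (fun x => dS f x CM) A); eauto. }
  assert (hM2 : forall x y, Ss <= x -> x < y -> y <= 1 -> lamC f A y CM < lamC f A x CM).
  { intros. eapply (M2 (fun x => f x CM) (fun x => dS f x CM) A); eauto. }
  assert (hK1 : forall s, 0 < s < Ss -> dS f s CM > lamC f A s CM).
  { intros. eapply (K1' (fun x => f x CM) (fun x => dS f x CM) A); eauto. }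
  assert (hK2 : forall s, Ss < s <= 1 -> dS f s CM < lamC f A s CM).
  { intros. eapply (K2' (fun x => f x CM) (fun x => dS f x CM) A); eauto. }
  assert (fh : forall x, 0 <= x -> f x CM = lamC f A x CM * (x + A)).
  { intros. unfold lamC. field. lra. }
  assert (LT : forall s, 0 <= s <= 1 -> (in_LT f A s CM <-> s <= Ss)).
  { intros s Hs; unfold in_LT, lamS; split; intro H.
    - destruct (Rle_dec s Ss) as [|Hn]; auto. exfalso.
      assert (K := hK2 s ltac:(lra)). lra.
    - destruct (Req_dec s 0) as [->|H0].
      { rewrite F'0; unfold lamC; rewrite F0; right; field; lra. }
      destruct (Req_dec s Ss) as [->|H1].
      { unfold lamS in HSsE. lra. }
      left. apply hK1. lra. }
  destruct HCw as [Hlam _]. rewrite Hlam.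
  inversion HSw; subst.
  -
    split.
    + intro H. assert (HLT : in_LT f A SR CM) by (unfold in_LT; lra).
      split; [auto|split; [lra|]]. split; [intros; lra|].
      intros HnT S' HS' Hne Heqv. destruct (Rle_dec SR S'); auto. exfalso.
      assert (SR <= Ss) by (apply LT; auto; lra).
      assert (hh := hM1 S' SR ltac:(lra) ltac:(lra) ltac:(lra)). lra.
    + intros [H _]. unfold in_LT in H. lra.
  - match goal with H : sfan _ _ _ _ _ _ |- _ => rename H into Hfan end.
    match goal with H : SM <> SR |- _ => rename H into Hab end.
    assert (HUi : forall s, 0 < s < 1 -> lamS f s CM = lamC f A s CM -> s = Ss).
    { intros s Hs He. apply Huniq; auto. }
    assert (Hgain : forall b, SM < b -> lamC f A SM CM <= vi -> SM < SR ->
              lamC f A SR CM >= lamC f A SM CM).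
    { intros b _ Hl Hlt. assert (G := fan_gain f CM (lamC f A SM CM) HD SM SR vi vf Hfan Hlt Hl).
      rewrite (fh SR ltac:(lra)), (fh SM ltac:(lra)) in G.
      nra. }
    destruct (fan_first _ _ _ _ _ _ Hfan) as (k & m & Hw & Hvi & Hm).
    assert (Hmne := elem_ne f CM k SM m Hw).
    assert (Hmr : (SM < SR /\ SM < m <= SR) \/ (SR < SM /\ SR <= m < SM)).
    { destruct Hm as [->|Hbt].
      - destruct (Rlt_le_dec SM SR); [left|right]; lra.
      - unfold strictly_between, Rmin, Rmax in Hbt. destruct (Rle_dec SM SR); [left|right]; lra. }
    split.
    + intro Hl.
      assert (HLT : in_LT f A SM CM).
      { apply LT; [lra|]. destruct (Rle_dec SM Ss) as [|Hn]; auto. exfalso.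
        destruct Hmr as [[H1 H2]|[H1 H2]].
        - assert (G := Hgain SR H1 Hl H1).
          assert (hh := hM2 SM SR ltac:(lra) ltac:(lra) ltac:(lra)). lra.
        - destruct k.
          + destruct Hw as [_ Hol].
            set (s := (Rmax m Ss + SM) / 2).
            assert (Hs1 : Rmax m Ss < SM) by (unfold Rmax; destruct (Rle_dec m Ss); lra).
            assert (Hs2 : m <= Rmax m Ss /\ Ss <= Rmax m Ss) by (unfold Rmax; destruct (Rle_dec m Ss); lra).
            assert (Hsb : strictly_between SM s m).
            { unfold strictly_between, Rmin, Rmax, s. destruct (Rle_dec SM m); lra. }
            destruct (Hol s Hsb) as [Ho _].
            simpl in Hvi.
            assert (E := shock_rel f A CM SM s HA ltac:(lra) ltac:(unfold s; lra) ltac:(unfold s; lra)).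
            unfold shock_speed in E at 1.
            set (q := (lamC f A s CM - lamC f A SM CM) * (s + A) / (s - SM)) in E.
            assert (Hq : q * (s - SM) = (lamC f A s CM - lamC f A SM CM) * (s + A)).
            { unfold q. field. unfold s; lra. }
            assert (hh := hM2 s SM ltac:(unfold s; lra) ltac:(unfold s; lra) ltac:(lra)).
            assert (q >= 0) by lra.
            assert (s - SM < 0) by (unfold s; lra).
            assert (s + A > 0) by (unfold s; lra).
            nra.
          + simpl in Hvi. assert (K := hK2 SM ltac:(lra)). unfold lamS in Hvi. lra. }
      split; [exact HLT|]. split; [lra|].
      assert (HSMle : SM <= Ss) by (apply LT; auto; lra).
      split.
      * intros [HT1 HT2]. assert (SM = Ss) by (apply HUi; auto).
        destruct (Rle_dec SR SM) as [|Hn]; auto. exfalso.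
        assert (G := Hgain SR ltac:(lra) Hl ltac:(lra)).
        assert (hh := hM2 SM SR ltac:(lra) ltac:(lra) ltac:(lra)). lra.
      * intros HnT S' HS' Hne Heqv.
        assert (SM <> Ss).
        { intro E. apply HnT. rewrite E. split; auto. }
        assert (S' > Ss).
        { destruct (Rle_dec S' Ss) as [Hle|]; [|lra]. exfalso.
          destruct (Rlt_le_dec S' SM).
          - assert (hh := hM1 S' SM ltac:(lra) ltac:(lra) ltac:(lra)). lra.
          - assert (hh := hM1 SM S' ltac:(lra) ltac:(lra) ltac:(lra)). lra. }
        destruct (Rle_dec SR S') as [|Hn]; auto. exfalso.
        assert (G := Hgain SR ltac:(lra) Hl ltac:(lra)).
        assert (hh := hM2 S' SR ltac:(lra) ltac:(lra) ltac:(lra)). lra.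
    + intros (HLT & _ & [HkT HkN]).
      assert (HSMle : SM <= Ss) by (apply LT; auto; lra).
      rewrite Hvi. destruct k; simpl.
      * assert (E := shock_rel f A CM SM m HA ltac:(lra) ltac:(lra) (not_eq_sym Hmne)).
        set (q := (lamC f A m CM - lamC f A SM CM) * (m + A) / (m - SM)) in E.
        assert (Hq : q * (m - SM) = (lamC f A m CM - lamC f A SM CM) * (m + A)).
        { unfold q. field. lra. }
        destruct Hmr as [[H1 H2]|[H1 H2]].
        -- assert (HLm : lamC f A m CM >= lamC f A SM CM).
           { destruct (Req_dec SM Ss) as [Ee|Ee].
             - exfalso. assert (SR <= SM).
               { apply HkT. split; [lra|]. rewrite Ee. exact HSsE. }
               lra.
             - destruct (Rle_dec m Ss).
               + left. apply hM1; lra.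
               + destruct (Rge_dec (lamC f A m CM) (lamC f A SM CM)) as [|Hlt]; auto. exfalso.
                 assert (hS := hM1 SM Ss ltac:(lra) ltac:(lra) ltac:(lra)).
                 set (lam := lamC f A SM CM) in *.
                 destruct (IVT (fun x => lam * (x + A) - f x CM) Ss m) as [z [Hz1 Hz2]].
                 { apply continuity_minus.
                   - apply continuity_mult. apply continuity_const. intros x y; reflexivity.
                     apply continuity_plus. apply derivable_continuous, derivable_id.
                     apply continuity_const. intros x y; reflexivity.
                   - apply (cont_of_der _ (fun x => dS f x CM) HD). }
                 { lra. }
                 { cbv beta. rewrite (fh Ss ltac:(lra)). assert (Ss + A > 0) by lra. nra. }
                 { cbv beta. rewrite (fh m ltac:(lra)). assert (m + A > 0) by lra. nra. }
                 cbv beta in Hz2. rewrite (fh z ltac:(lra)) in Hz2. assert (z + A > 0) by lra.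
                 assert (Hzl : lamC f A z CM = lam) by nra.
                 assert (Hzm : z <> m).
                 { intro Ez. rewrite Ez in Hzl. lra. }
                 assert (SR <= z).
                 { apply HkN; [| lra | lra | exact Hzl].
                   intros [H3 H4]. apply Ee. apply HUi; auto. }
                 lra. }
           assert (m - SM > 0) by lra. assert (m + A > 0) by lra. nra.
        -- assert (hh := hM1 m SM ltac:(lra) ltac:(lra) ltac:(lra)).
           assert (m - SM < 0) by lra. assert (m + A > 0) by lra. nra.
      * unfold in_LT in HLT. lra.
Qed.
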